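(* Let $f\in\mathbb{R}^n\setminus\mathbb{Z}^n$ and $B,L\in\mathcal{C}^n_f$. The following are equivalent: (i) $C_B(R,f)\subseteq C_L(R,f)$ for every $k\in\mathbb{N}$ and every $R\in\mathbb{R}^{n\times k}$; (ii) $B\supseteq L$; (iii) $\psi_{B-f}\le\psi_{L-f}$ pointwise on $\mathbb{R}^n$; (iv) $\rho_f(B,L)\le1$.
   Context: $\mathcal{C}^n_f$ is the family of all $n$-dimensional closed convex subsets of $\mathbb{R}^n$ containing $f$ in their interior. For $B$ closed convex with $0\in\operatorname{int}(B)$, $\psi_B(r)=\inf\{\lambda>0:r\in\lambda B\}$. For $R=(r_1,\dots,r_k)$ and $B\in\mathcal{C}^n_f$, $C_B(R,f)=\{s\in\mathbb{R}^k_{\ge0}:\sum_{j=1}^k s_j\psi_{B-f}(r_j)\ge1\}$. $\rho_f(B,L)=\inf\{\alpha>0:C_B(R,f)\subseteq\frac1\alpha C_L(R,f)$ for all $k\in\mathbb{N}$ and all $R\in\mathbb{R}^{n\times k}\}$. *)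

(* Defs.v *)
From HB Require Import structures.
From mathcomp Require Import all_boot all_order all_algebra.
From mathcomp Require Import all_classical all_reals all_analysis.
Set Implicit Arguments. Unset Strict Implicit. Unset Printing Implicit Defensive.
Import Order.TTheory GRing.Theory Num.Theory.
Import numFieldNormedType.Exports.
Local Open Scope classical_set_scope.
Local Open Scope ring_scope.

Definition convexP {R : realType} {n : nat} (A : set 'rV[R]_n) : Prop :=
  forall x y (t : R), A x -> A y -> 0 <= t <= 1 -> A (t *: x + (1 - t) *: y).

(* C^n_f : closed convex sets with f in their interior
   (nonempty interior = n-dimensional) *)
Definition Cnf {R : realType} {n : nat} (f : 'rV[R]_n) (B : set 'rV[R]_n) : Prop :=
  closed B /\ convexP B /\ (interior B) f.

Definition translate {R : realType} {n : nat} (B : set 'rV[R]_n) (f : 'rV[R]_n)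
  : set 'rV[R]_n := [set b - f | b in B].

Definition gauge {R : realType} {n : nat} (B : set 'rV[R]_n) (r : 'rV[R]_n) : R :=
  inf [set l : R | 0 < l /\ exists2 b, B b & r = l *: b].

Definition rcol {R : realType} {n k : nat} (Rm : 'M[R]_(n, k)) (j : 'I_k) : 'rV[R]_n :=
  (col j Rm)^T.

Definition CB {R : realType} {n k : nat} (B : set 'rV[R]_n) (Rm : 'M[R]_(n, k))
  (f : 'rV[R]_n) : set 'rV[R]_k :=
  [set s | (forall j, 0 <= s ord0 j) /\
           1 <= \sum_(j < k) s ord0 j * gauge (translate B f) (rcol Rm j)].

Definition scale_set {R : realType} {k : nat} (c : R) (A : set 'rV[R]_k) : set 'rV[R]_k :=
  [set c *: a | a in A].

(* rho_f(B,L) = inf { alpha > 0 : C_B(R,f) \subseteq (1/alpha) C_L(R,f) for all k, R },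
   taken in the extended reals (inf of the empty set = +oo) *)
Definition rho {R : realType} {n : nat} (f : 'rV[R]_n) (B L : set 'rV[R]_n) : \bar R :=
  ereal_inf [set (a%:E)%E | a in
    [set a : R | 0 < a /\ forall (k : nat) (Rm : 'M[R]_(n, k)),
        CB B Rm f `<=` scale_set a^-1 (CB L Rm f)]].

(* Main.v *)
Set Warnings "-all".
Require Import Defs.
From HB Require Import structures.
From mathcomp Require Import all_boot all_order all_algebra.
From mathcomp Require Import all_classical all_reals all_analysis.
From mathcomp Require Import ring lra.
Import Order.TTheory GRing.Theory Num.Theory.
Import numFieldNormedType.Exports.
Local Open Scope classical_set_scope.
Local Open Scope ring_scope.

Definition Sg {R : realType} {n : nat} (B : set 'rV[R]_n) (f r : 'rV[R]_n) :=
  [set l : R | 0 < l /\ exists2 b, translate B f b & r = l *: b].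

Lemma gaugeE {R : realType} {n : nat} (B : set 'rV[R]_n) f r :
  gauge (translate B f) r = inf (Sg B f r).
Proof. by []. Qed.

Lemma transP {R : realType} {n : nat} (B : set 'rV[R]_n) f b :
  translate B f b <-> B (b + f).
Proof.
split; first by case=> x Bx <-; rewrite subrK.
by move=> Bb; exists (b + f) => //; rewrite addrK.
Qed.

Lemma Cnf_f {R : realType} {n : nat} (f : 'rV[R]_n) B : Cnf f B -> B f.
Proof. by case=> _ [_ Hi]; apply: nbhs_singleton. Qed.

Lemma Sg_ne {R : realType} {n : nat} (f : 'rV[R]_n) B r :
  Cnf f B -> Sg B f r !=set0.
Proof.
case=> _ [_ Hi]; move: Hi => /nbhs_ballP [e e0 Hb].
have r0 : 0 <= `|r| by [].
set l := (`|r| + 1) / e.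
have l0 : 0 < l by rewrite /l divr_gt0 // ltr_wpDl.
exists l; split => //; exists (l^-1 *: r); last first.
  by rewrite scalerA divff ?scale1r // gt_eqF.
apply/transP; apply: Hb; rewrite -ball_normE /=.
rewrite (addrC _ f) opprD addrA subrr add0r normrN normrZ ger0_norm ?invr_ge0 ?ltW //.
rewrite /l invf_div.
have h1 : (`|r| + 1)^-1 * (`|r| + 1) = 1 by rewrite mulVf // gt_eqF // ltr_wpDl.
have h2 : 0 < (`|r| + 1)^-1 by rewrite invr_gt0 ltr_wpDl.
move: h1 h2; set ig := (`|r| + 1)^-1 => h1 h2.
have e1 : 0 < e := e0. have := mulr_gt0 e1 h2. move: (`|r|) h1 => x h1; move=> h3; nra.
Qed.

Lemma Sg_up {R : realType} {n : nat} (f : 'rV[R]_n) B r l0 l :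
  Cnf f B -> Sg B f r l0 -> l0 <= l -> Sg B f r l.
Proof.
move=> HB [l00 [b0 /transP Bb0 ->]] le.
have l0' : 0 < l by apply: lt_le_trans le.
split => //; exists ((l0 / l) *: b0); last first.
  by rewrite scalerA mulrCA divff ?mulr1 // gt_eqF.
have Bf := Cnf_f _ _ HB.
apply/transP.
case: HB => _ [cv _].
have t01 : 0 <= l0 / l <= 1.
  have l0w := ltW l00; have lw := ltW l0'.
  by rewrite divr_ge0 //= ler_pdivrMr // mul1r.
have := cv (b0 + f) f (l0 / l) Bb0 Bf t01.
rewrite scalerDr scalerBl scale1r -addrA (addrC (_ *: f)) subrK.
by [].
Qed.

Lemma Sg_lb {R : realType} {n : nat} (f : 'rV[R]_n) B r :
  lbound (Sg B f r) 0.
Proof. by move=> l [/ltW]. Qed.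

Lemma gauge_ge0 {R : realType} {n : nat} (f : 'rV[R]_n) B r :
  Cnf f B -> 0 <= gauge (translate B f) r.
Proof. by move=> HB; rewrite gaugeE; apply: lb_le_inf (Sg_ne _ _ r HB) (@Sg_lb _ _ _ _ _). Qed.

Lemma gauge_le {R : realType} {n : nat} (f : 'rV[R]_n) B r l :
  Sg B f r l -> gauge (translate B f) r <= l.
Proof. by move=> Hl; rewrite gaugeE; apply: ge_inf => //; exists 0; apply: Sg_lb. Qed.

Lemma gauge_lt {R : realType} {n : nat} (f : 'rV[R]_n) B r l :
  Cnf f B -> gauge (translate B f) r < l -> Sg B f r l.
Proof.
move=> HB; rewrite gaugeE => /(inf_lt (Sg_ne _ _ r HB)) [l0 Hl0 lt].
exact: Sg_up _ _ _ HB Hl0 (ltW lt).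
Qed.

Lemma gauge_mem {R : realType} {n : nat} (f : 'rV[R]_n) B r :
  B (r + f) -> gauge (translate B f) r <= 1.
Proof.
move=> H; apply: gauge_le; split => //; exists r; last by rewrite scale1r.
exact/transP.
Qed.

Lemma gauge_in {R : realType} {n : nat} (f : 'rV[R]_n) B r :
  Cnf f B -> gauge (translate B f) r <= 1 -> B (r + f).
Proof.
move=> HB g1; have [cl _] := HB; apply: cl => U /nbhs_ballP [e e0 Hb].
have e1 : 0 < e := e0.
have r0 : 0 <= `|r| by [].
have h2 : 0 < (`|r| + 1)^-1 by rewrite invr_gt0 ltr_wpDl.
have h1 : (`|r| + 1)^-1 * (`|r| + 1) = 1 by rewrite mulVf // gt_eqF // ltr_wpDl.
set d := e / 2 * (`|r| + 1)^-1.
have d0 : 0 < d by rewrite /d !mulr_gt0 // invr_gt0.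
have [_ [b /transP Bb rE]] : Sg B f r (1 + d).
  by apply: gauge_lt => //; apply: le_lt_trans g1 _; rewrite ltrDl.
exists (b + f); split => //; apply: Hb; rewrite -ball_normE /=.
have -> : r + f - (b + f) = d *: b.
  by rewrite opprD addrACA subrr addr0 rE scalerDl scale1r addrAC subrr add0r.
have nr : `|r| = (1 + d) * `|b| by rewrite rE normrZ ger0_norm // ltW // ltr_wpDl // ltW.
rewrite normrZ ger0_norm ?ltW //.
have nb : 0 <= `|b| by [].
move: h1 h2 nr nb; rewrite /d; set ig := (`|r| + 1)^-1; move: (`|r|) (`|b|) => x y.
move=> h1 h2 nr nb.
have dd : 0 <= e / 2 * ig by rewrite mulr_ge0 // ?divr_ge0 // ltW.
have yx : y <= x + 1 by rewrite nr; nra.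
have iy : ig * y <= 1 by rewrite -h1; apply: ler_wpM2l => //; apply: ltW.
have c0 : 0 < e / 2 by rewrite divr_gt0.
have ce : e / 2 < e by rewrite ltr_pdivrMr // ltr_pMr // ltr1n.
have := ler_wpM2l (ltW c0) iy; rewrite mulr1 => H.
by rewrite -[e / 2 * ig * y]mulrA; apply: le_lt_trans H ce.
Qed.

Lemma rcolT {R : realType} {n : nat} (r : 'rV[R]_n) : rcol (r^T) ord0 = r.
Proof. by apply/rowP => i; rewrite !mxE. Qed.

Lemma key {R : realType} {n : nat} (f : 'rV[R]_n) B L r a :
  Cnf f B -> Cnf f L -> 0 < a ->
  (forall Rm : 'M[R]_(n,1), CB B Rm f `<=` scale_set a^-1 (CB L Rm f)) ->
  gauge (translate B f) r <= a * gauge (translate L f) r.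
Proof.
move=> HB HL a0 H.
have gL0 := gauge_ge0 _ _ r HL.
have := gauge_ge0 _ _ r HB; rewrite le_eqVlt => /orP [/eqP <-|gp].
  by rewrite mulr_ge0 // ltW.
move: gp gL0; set gB := gauge (translate B f) r; set gL := gauge (translate L f) r => gp gL0.
set s : 'rV[R]_1 := \row_(j < 1) gB^-1.
have Hs : CB B r^T f s.
  split => [j|]; first by rewrite mxE invr_ge0 ltW.
  by rewrite big_ord1 mxE rcolT mulVf // gt_eqF.
have [s' [_ Hs'] sE] := H _ s Hs.
have s'E : s' = a *: s by rewrite -sE scalerA divff ?scale1r // gt_eqF.
move: Hs'; rewrite big_ord1 rcolT s'E !mxE -/gL => h.
have h1 : gB^-1 * gB = 1 by rewrite mulVf // gt_eqF.
move: h h1; set ig := gB^-1 => h h1.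
nra.
Qed.

Theorem proposition3p11 (R : realType) (n : nat) (f : 'rV[R]_n)
  (B L : set 'rV[R]_n) :
  ~ (forall i, f ord0 i \is a Num.int) ->
  Cnf f B -> Cnf f L ->
  [/\ ((forall (k : nat) (Rm : 'M[R]_(n, k)), CB B Rm f `<=` CB L Rm f) <-> L `<=` B),
      (L `<=` B <-> (forall r, gauge (translate B f) r <= gauge (translate L f) r)) &
      ((forall r, gauge (translate B f) r <= gauge (translate L f) r) <->
         (rho f B L <= 1%:E)%E)].
Proof.
move=> _ HB HL.
have ii_iii : L `<=` B -> forall r, gauge (translate B f) r <= gauge (translate L f) r.
  move=> LB r; rewrite [X in _ <= X]gaugeE; apply: lb_le_inf (Sg_ne _ _ r HL) _.
  move=> l [l0 [b /transP Lb rE]]; apply: gauge_le; split => //; exists b => //.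
  by apply/transP; exact: LB.
have iii_ii : (forall r, gauge (translate B f) r <= gauge (translate L f) r) -> L `<=` B.
  move=> H x Lx; rewrite -(subrK f x); apply: gauge_in HB _.
  by apply: le_trans (H _) _; apply: gauge_mem; rewrite subrK.
have iii_i : (forall r, gauge (translate B f) r <= gauge (translate L f) r) ->
    forall k (Rm : 'M[R]_(n, k)), CB B Rm f `<=` CB L Rm f.
  move=> H k Rm s [s0 hs]; split => //; apply: le_trans hs _.
  by apply: ler_sum => j _; apply: ler_wpM2l.
have i_iii : (forall k (Rm : 'M[R]_(n, k)), CB B Rm f `<=` CB L Rm f) ->
    forall r, gauge (translate B f) r <= gauge (translate L f) r.
  move=> H r; rewrite -[X in _ <= X]mul1r; apply: (key _ _ _ _ _ HB HL ltr01) => Rm s Hs.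
  by exists s; [exact: H | rewrite invr1 scale1r].
have iii_iv : (forall r, gauge (translate B f) r <= gauge (translate L f) r) ->
    (rho f B L <= 1%:E)%E.
  move=> H; apply: ereal_inf_lbound; exists 1 => //; split => [|k Rm s Hs]; first exact: ltr01.
  by exists s; [exact: iii_i | rewrite invr1 scale1r].
have iv_iii : (rho f B L <= 1%:E)%E ->
    forall r, gauge (translate B f) r <= gauge (translate L f) r.
  move=> H r; apply/ler_addgt0Pr => e e0.
  have gL0 := gauge_ge0 _ _ r HL.
  move: gL0; set gL := gauge (translate L f) r => gL0.
  have g1 : 0 < gL + 1 by rewrite ltr_wpDl.
  set d := e / (gL + 1).
  have d0 : 0 < d by rewrite divr_gt0.
  have dE : d * (gL + 1) = e by rewrite /d divfK // gt_eqF.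
  have : (rho f B L < (1 + d)%:E)%E by apply: le_lt_trans H _; rewrite lte_fin ltrDl.
  move=> /ereal_inf_lt [_ [a [a0 Ha] <-]]; rewrite lte_fin => ad.
  have := key _ _ _ r _ HB HL a0 (Ha 1%N); rewrite -/gL => h.
  nra.
split; split; by auto.
Qed.
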